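(* Let $\mathcal{X}$ be a set of feasible solutions and $f_1,\dots,f_m:\mathcal{X}\to\mathbb{R}$ objective functions, $\boldsymbol{f}=(f_1,\dots,f_m)$. Fix an integer $K\ge1$, a preference vector $\boldsymbol{\lambda}$ with $\lambda_i\ge0$, $\sum_{i=1}^m\lambda_i=1$, an ideal point $\boldsymbol{z}^*\in\mathbb{R}^m$, and smoothing parameters $\mu>0$, $\mu_1,\dots,\mu_m>0$. For $X_K=\{\boldsymbol{x}^{(1)},\dots,\boldsymbol{x}^{(K)}\}\subseteq\mathcal{X}$ define the smooth Tchebycheff set scalarization $$g^{(\mathrm{STCH\text{-}Set})}_{\mu,\{\mu_i\}}(X_K\mid\boldsymbol{\lambda})=\mu\log\left(\sum_{i=1}^m\exp\left(\frac{\lambda_i\left(-\mu_i\log\left(\sum_{k=1}^K e^{-f_i(\boldsymbol{x}^{(k)})/\mu_i}\right)-z_i^*\right)}{\mu}\right)\right).$$ Let $X^*_K$ be an optimal solution set, i.e. a minimizer of $g^{(\mathrm{STCH\text{-}Set})}_{\mu,\{\mu_i\}}(\cdot\mid\boldsymbol{\lambda})$ over all sets of $K$ solutions in $\mathcal{X}$. Then every solution in $X^*_K$ is weakly Pareto optimal for $\min_{\boldsymbol{x}\in\mathcal{X}}\boldsymbol{f}(\boldsymbol{x})$. In addition, every solution in $X^*_K$ is Pareto optimal for $\min_{\boldsymbol{x}\in\mathcal{X}}\boldsymbol{f}(\boldsymbol{x})$ if either (1) the optimal solution set $X^*_K$ is unique, or (2) all preference coefficients are positive ($\lambda_i>0$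 for all $i$).
   Context: $\boldsymbol{x}^{(a)}$ dominates $\boldsymbol{x}^{(b)}$ if $f_i(\boldsymbol{x}^{(a)})\le f_i(\boldsymbol{x}^{(b)})$ for all $i$ and $f_j(\boldsymbol{x}^{(a)})<f_j(\boldsymbol{x}^{(b)})$ for some $j$; $\boldsymbol{x}^{(a)}$ strictly dominates $\boldsymbol{x}^{(b)}$ if $f_i(\boldsymbol{x}^{(a)})<f_i(\boldsymbol{x}^{(b)})$ for all $i$. A solution $\boldsymbol{x}^*\in\mathcal{X}$ is Pareto optimal if no $\boldsymbol{x}\in\mathcal{X}$ dominates it, and weakly Pareto optimal if no $\boldsymbol{x}\in\mathcal{X}$ strictly dominates it. *)

(* Defs.v *)
From HB Require Import structures.
From mathcomp Require Import all_boot all_order all_algebra.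
From mathcomp Require Import all_classical all_reals.
From mathcomp Require Import all_analysis.
Set Implicit Arguments. Unset Strict Implicit. Unset Printing Implicit Defensive.
Import Order.TTheory GRing.Theory Num.Theory.
Local Open Scope ring_scope.

Section Defs.
Variables (R : realType) (m : nat) (X : Type).

Definition dominates (f : 'I_m -> X -> R) (xa xb : X) : Prop :=
  (forall i, f i xa <= f i xb) /\ (exists j, f j xa < f j xb).

Definition strictly_dominates (f : 'I_m -> X -> R) (xa xb : X) : Prop :=
  forall i, f i xa < f i xb.

(* The feasible set is the whole type X. *)
Definition pareto_optimal (f : 'I_m -> X -> R) (x : X) : Prop :=
  ~ exists y : X, dominates f y x.

Definition weakly_pareto_optimal (f : 'I_m -> X -> R) (x : X) : Prop :=
  ~ exists y : X, strictly_dominates f y x.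

Definition stch_set (K : nat) (f : 'I_m -> X -> R) (lam z mus : 'I_m -> R)
    (mu : R) (xs : 'I_K -> X) : R :=
  mu * ln (\sum_(i < m)
     expR (lam i * (- (mus i * ln (\sum_(k < K) expR (- f i (xs k) / mus i))) - z i)
           / mu)).

Definition same_solution_set (K : nat) (xs ys : 'I_K -> X) : Prop :=
  forall y : X, (exists k, xs k = y) <-> (exists k, ys k = y).
End Defs.

(* Main.v *)
Require Import Defs.
From HB Require Import structures.
From mathcomp Require Import all_boot all_order all_algebra.
From mathcomp Require Import all_classical all_reals.
From mathcomp Require Import all_analysis.
Import Order.TTheory GRing.Theory Num.Theory.
Local Open Scope ring_scope.

Lemma sum_le_lt (R : realType) n (F G : 'I_n -> R) (j : 'I_n) :
  (forall i, F i <= G i) -> F j < G j -> \sum_(i < n) F i < \sum_(i < n) G i.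
Proof.
move=> hle hlt.
rewrite (bigD1 j) //= [X in _ < X](bigD1 j) //=.
apply: ltr_leD => //; apply: ler_sum => i _; exact: hle.
Qed.

Lemma sum_exp_gt0 (R : realType) n (F : 'I_n -> R) : (0 < n)%N ->
  0 < \sum_(i < n) expR (F i).
Proof.
case: n F => // n F _.
rewrite big_ord_recl; apply: ltr_pwDl; first exact: expR_gt0.
by apply: sumr_ge0 => i _; apply/ltW/expR_gt0.
Qed.

Section T.
Context (R : realType) (m K : nat) (X : Type) (f : 'I_m -> X -> R)
    (lam z mus : 'I_m -> R) (mu : R).

Definition Tm i (xs : 'I_K -> X) : R :=
  lam i * (- (mus i * ln (\sum_(k < K) expR (- f i (xs k) / mus i))) - z i) / mu.

Lemma stchE xs : stch_set f lam z mus mu xs = mu * ln (\sum_(i < m) expR (Tm i xs)).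
Proof. by []. Qed.

Lemma S_le i (xs ys : 'I_K -> X) : 0 < mus i ->
  (forall k, f i (ys k) <= f i (xs k)) ->
  \sum_(k < K) expR (- f i (xs k) / mus i) <= \sum_(k < K) expR (- f i (ys k) / mus i).
Proof.
move=> hm h; apply: ler_sum => k _; rewrite ler_expR ler_pM2r ?invr_gt0 //.
by rewrite lerN2.
Qed.

Lemma Tm_le i (xs ys : 'I_K -> X) : (0 < K)%N -> 0 <= lam i -> 0 < mu -> 0 < mus i ->
  (forall k, f i (ys k) <= f i (xs k)) -> Tm i ys <= Tm i xs.
Proof.
move=> hK hl hmu hm h; rewrite /Tm ler_pM2r ?invr_gt0 //.
apply: ler_wpM2l => //; rewrite lerD2r lerN2 ler_pM2l //.
rewrite ler_ln ?posrE; [exact: S_le | exact: sum_exp_gt0 | exact: sum_exp_gt0].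
Qed.

Lemma Tm_lt i (xs ys : 'I_K -> X) (k0 : 'I_K) : 0 < lam i -> 0 < mu -> 0 < mus i ->
  (forall k, f i (ys k) <= f i (xs k)) -> f i (ys k0) < f i (xs k0) -> Tm i ys < Tm i xs.
Proof.
move=> hl hmu hm h h0; have hK : (0 < K)%N by case: (K) (k0) => [[]|].
rewrite /Tm ltr_pM2r ?invr_gt0 //.
rewrite ltr_pM2l // ltrD2r ltrN2 ltr_pM2l //.
rewrite ltr_ln ?posrE; [|exact: sum_exp_gt0 | exact: sum_exp_gt0].
apply: (@sum_le_lt _ _ _ _ k0) => [k|]; rewrite ?ltr_expR ?ler_expR.
  by rewrite ler_pM2r ?invr_gt0 // lerN2.
by rewrite ltr_pM2r ?invr_gt0 // ltrN2.
Qed.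

Lemma g_le (xs ys : 'I_K -> X) : (0 < K)%N -> (0 < m)%N -> (forall i, 0 <= lam i) -> 0 < mu ->
  (forall i, 0 < mus i) -> (forall i k, f i (ys k) <= f i (xs k)) ->
  stch_set f lam z mus mu ys <= stch_set f lam z mus mu xs.
Proof.
move=> hK hm hl hmu hms h; rewrite (stchE ys) (stchE xs) (ler_pM2l hmu).
have p1 : \sum_(i < m) expR (Tm i ys) \in Num.pos.
  by rewrite posrE; exact: (@sum_exp_gt0 _ _ (fun i => Tm i ys) hm).
have p2 : \sum_(i < m) expR (Tm i xs) \in Num.pos.
  by rewrite posrE; exact: (@sum_exp_gt0 _ _ (fun i => Tm i xs) hm).
rewrite (ler_ln p1 p2).
apply: ler_sum => i _; rewrite ler_expR.
exact: (@Tm_le i xs ys hK (hl i) hmu (hms i) (h i)).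
Qed.

Lemma g_lt (xs ys : 'I_K -> X) (j : 'I_m) (k0 : 'I_K) : (forall i, 0 <= lam i) -> 0 < mu ->
  (forall i, 0 < mus i) -> (forall i k, f i (ys k) <= f i (xs k)) ->
  0 < lam j -> f j (ys k0) < f j (xs k0) ->
  stch_set f lam z mus mu ys < stch_set f lam z mus mu xs.
Proof.
move=> hl hmu hms h hj h0.
have hK : (0 < K)%N by case: (K) (k0) => [[]|].
have hm : (0 < m)%N by case: (m) (j) => [[]|].
rewrite (stchE ys) (stchE xs) (ltr_pM2l hmu).
have p1 : \sum_(i < m) expR (Tm i ys) \in Num.pos.
  by rewrite posrE; exact: (@sum_exp_gt0 _ _ (fun i => Tm i ys) hm).
have p2 : \sum_(i < m) expR (Tm i xs) \in Num.pos.
  by rewrite posrE; exact: (@sum_exp_gt0 _ _ (fun i => Tm i xs) hm).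
rewrite (ltr_ln p1 p2).
apply: (@sum_le_lt _ _ _ _ j) => [i|]; rewrite ?ler_expR ?ltr_expR.
  exact: (@Tm_le i xs ys hK (hl i) hmu (hms i) (h i)).
exact: (@Tm_lt j xs ys k0 hj hmu (hms j) (h j) h0).
Qed.
End T.

Theorem theorem2 (R : realType) (m K : nat) (X : Type) (f : 'I_m -> X -> R)
    (lam z mus : 'I_m -> R) (mu : R)
    (hK : (1 <= K)%N)
    (hlam0 : forall i, 0 <= lam i) (hlam1 : \sum_(i < m) lam i = 1)
    (hmu : 0 < mu) (hmus : forall i, 0 < mus i)
    (xs : 'I_K -> X)
    (hopt : forall ys : 'I_K -> X, stch_set f lam z mus mu xs <= stch_set f lam z mus mu ys) :
  (forall k, weakly_pareto_optimal f (xs k)) /\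
  ((forall ys : 'I_K -> X,
      (forall zs : 'I_K -> X, stch_set f lam z mus mu ys <= stch_set f lam z mus mu zs) ->
      same_solution_set ys xs) ->
   forall k, pareto_optimal f (xs k)) /\
  ((forall i, 0 < lam i) -> forall k, pareto_optimal f (xs k)).
Proof.
have [j hj] : exists j, 0 < lam j.
  apply/not_existsP => hn.
  have : \sum_(i < m) lam i <= 0.
    apply: sumr_le0 => i _; rewrite leNgt; apply/negP => h; exact: (hn i).
  by rewrite hlam1 ler10.
have hm : (0 < m)%N by case: (m) j {hj} => [[]|].
pose rep (k : 'I_K) (y : X) := fun k' => if k' == k then y else xs k'.
have rep_le k y : (forall i, f i y <= f i (xs k)) -> forall i k', f i (rep k y k') <= f i (xs k').
  by move=> h i k'; rewrite /rep; case: eqP => [->|]//.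
split; [|split].
- move=> k [y hy].
  have := hopt (rep k y); apply/negP; rewrite -ltNge.
  apply: (@g_lt _ _ _ _ _ _ _ _ _ _ _ j k) => //.
    by apply: rep_le => i; apply/ltW.
  by rewrite /rep eqxx.
- move=> huniq k [y [hy1 [j' hj']]].
  pose ys := fun k' => if pselect (xs k' = xs k) then y else xs k'.
  have hle : forall i k', f i (ys k') <= f i (xs k').
    by move=> i k'; rewrite /ys; case: pselect => [e|_] /=; [rewrite e; exact: hy1 | exact: lexx].
  have hyo : forall zs : 'I_K -> X, stch_set f lam z mus mu ys <= stch_set f lam z mus mu zs.
    have h1 : stch_set f lam z mus mu ys <= stch_set f lam z mus mu xs.
      apply: g_le; [exact: hK|exact: hm|exact: hlam0|exact: hmu|exact: hmus|exact: hle].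
    move=> w; exact: (le_trans h1 (hopt w)).
  have [_ /(_ (ex_intro _ k erefl))] := huniq ys hyo (xs k).
  move=> [k' hk']; move: hk'; rewrite /ys; case: pselect => [e|hne] /= hyx; last by exact: (hne hyx).
  by move: hj'; rewrite hyx ltxx.
- move=> hpos k [y [hy1 [j' hj']]].
  have := hopt (rep k y); apply/negP; rewrite -ltNge.
  apply: (@g_lt _ _ _ _ _ _ _ _ _ _ _ j' k) => //.
    exact: rep_le.
  by rewrite /rep eqxx.
Qed.
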